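(* Let $\mathsf{L}\in\{\mathsf{InqL},\mathbf{PT}\}$ and let $X$ be a nonempty team on a finite set $\{p_1,\dots,p_n\}$ of propositional variables. Then the formula $\Theta_X=\neg\neg\bigvee_{v\in X}(p_1^{v(p_1)}\wedge\dots\wedge p_n^{v(p_n)})$ is $\mathcal{F}$-projective in $\mathsf{L}$, where $\mathcal{F}$ is the class of all flat substitutions of $\mathsf{L}$.
   Context: Here $p^1:=p$, $p^0:=\neg p$, and a team on $V$ is a set of functions $V\to\{0,1\}$. A valuation is a function $v:\mathrm{Prop}\to\{0,1\}$ on the set Prop of propositional variables; a team is a set of valuations. Formulas of $\mathbf{PT}$: $\phi::=p\mid\bot\mid\top\mid\,=\!(\phi_1,\dots,\phi_n,\phi)\mid\neg\phi\mid\phi\wedge\phi\mid\phi\otimes\phi\mid\phi\vee\phi\mid\phi\to\phi$; formulas of $\mathsf{InqL}$ are built from $p,\bot,\top$ by $\wedge,\vee,\to$, with $\neg\phi:=\phi\to\bot$. Satisfaction on a team $X$: $X\models p$ iff $v(p)=1$ for all $v\in X$; $X\models\bot$ iff $X=\emptyset$; $X\models\top$ always; $\wedge$ conjunction; $X\models\phi\otimes\psi$ iff $X=Y\cup Z$ with $Y\models\phi$, $Z\models\psi$; $X\models\phi\vee\psi$ iff $X\models\phi$ or $X\models\psi$; $X\models\phi\to\psi$ iff every $Y\subseteq X$ with $Y\models\phi$ satisfies $\psi$; $X\models\neg\phi$ iff $\{v\}\not\models\phi$ for all $v\in X$; $X\models\,=\!(\phi_1,\dots,\phi_n,\psi)$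 iff $X\models\bigwedge_i(\phi_i\vee(\phi_i\to\bot))\to(\psi\vee(\psi\to\bot))$. For finite $\Gamma$, $\Gamma\vdash_{\mathsf L}\phi$ iff all formulas are in the language of $\mathsf L$ and every team satisfying all of $\Gamma$ satisfies $\phi$. $\phi$ is flat if for all teams $X$: $X\models\phi$ iff $\{v\}\models\phi$ for all $v\in X$. A substitution of $\mathsf L$ is a map on $\mathsf L$-formulas commuting with all connectives and atoms; it is flat if each $\sigma(p)$ is flat. For a set $\mathcal S$ of substitutions, a formula $\phi$ is $\mathcal S$-projective in $\mathsf L$ if there is $\sigma\in\mathcal S$ with $\vdash_{\mathsf L}\sigma(\phi)$, and $\phi,\sigma(p)\vdash_{\mathsf L}p$ and $\phi,p\vdash_{\mathsf L}\sigma(p)$ for all propositional variables $p$. *)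

(* Defs.v *)
From Stdlib Require Import List.
Import ListNotations.

Definition valuation := nat -> bool.
Definition team := valuation -> Prop.

(* Common syntax of PT; InqL formulas form a sublanguage (see in_lang). *)
Inductive form : Type :=
| Atom : nat -> form
| Bot : form
| Top : form
| Dep : list form -> form -> form
| Neg : form -> form                 (* PT's primitive negation *)
| And : form -> form -> form
| Tensor : form -> form -> form
| Vee : form -> form -> form
| Imp : form -> form -> form.

Definition subteam (Y X : team) : Prop := forall v, Y v -> X v.
Definition empty_team (X : team) : Prop := forall v, ~ X v.
Definition single (v : valuation) : team := fun w => w = v.

Fixpoint sat (phi : form) (X : team) {struct phi} : Prop :=
  match phi with
  | Atom p => forall v, X v -> v p = true
  | Bot => empty_team X
  | Top => True
  | Dep l psi =>
      (* X |= /\_i (phi_i \/ (phi_i -> bot)) -> (psi \/ (psi -> bot)) *)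
      forall Y, subteam Y X ->
        (fix allsat (l : list form) (Y : team) {struct l} : Prop :=
           match l with
           | [] => True
           | a :: l' =>
               (sat a Y \/ (forall Z, subteam Z Y -> sat a Z -> empty_team Z))
               /\ allsat l' Y
           end) l Y ->
        (sat psi Y \/ (forall Z, subteam Z Y -> sat psi Z -> empty_team Z))
  | Neg a => forall v, X v -> ~ sat a (single v)
  | And a b => sat a X /\ sat b X
  | Tensor a b => exists Y Z, (forall v, X v <-> (Y v \/ Z v)) /\ sat a Y /\ sat b Z
  | Vee a b => sat a X \/ sat b X
  | Imp a b => forall Y, subteam Y X -> sat a Y -> sat b Y
  end.

Inductive logic : Type := InqL | PT.

Fixpoint in_InqL (phi : form) : Prop :=
  match phi with
  | Atom _ | Bot | Top => True
  | And a b | Vee a b | Imp a b => in_InqL a /\ in_InqL b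
  | Dep _ _ | Neg _ | Tensor _ _ => False
  end.

Definition in_lang (L : logic) (phi : form) : Prop :=
  match L with
  | InqL => in_InqL phi
  | PT => True
  end.

Definition neg (L : logic) (phi : form) : form :=
  match L with
  | InqL => Imp phi Bot
  | PT => Neg phi
  end.

Definition entails (L : logic) (Gamma : list form) (phi : form) : Prop :=
  (forall g, In g Gamma -> in_lang L g) /\ in_lang L phi /\
  forall X : team, (forall g, In g Gamma -> sat g X) -> sat phi X.

Definition flat (phi : form) : Prop :=
  forall X : team, sat phi X <-> (forall v, X v -> sat phi (single v)).

Fixpoint subst (sigma : nat -> form) (phi : form) : form :=
  match phi with
  | Atom p => sigma p
  | Bot => Bot
  | Top => Top
  | Dep l psi => Dep (map (subst sigma) l) (subst sigma psi)
  | Neg a => Neg (subst sigma a)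
  | And a b => And (subst sigma a) (subst sigma b)
  | Tensor a b => Tensor (subst sigma a) (subst sigma b)
  | Vee a b => Vee (subst sigma a) (subst sigma b)
  | Imp a b => Imp (subst sigma a) (subst sigma b)
  end.

Definition is_subst_of (L : logic) (sigma : nat -> form) : Prop :=
  forall p, in_lang L (sigma p).

Definition flat_subst (L : logic) (sigma : nat -> form) : Prop :=
  is_subst_of L sigma /\ forall p, flat (sigma p).

Definition projective (L : logic) (S : (nat -> form) -> Prop) (phi : form) : Prop :=
  exists sigma, S sigma /\
    entails L [] (subst sigma phi) /\
    forall p, entails L [phi; sigma p] (Atom p) /\ entails L [phi; Atom p] (sigma p).

Fixpoint bigAnd (l : list form) : form :=
  match l with
  | [] => Top
  | [a] => a
  | a :: l' => And a (bigAnd l')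
  end.

Fixpoint bigVee (l : list form) : form :=
  match l with
  | [] => Bot
  | [a] => a
  | a :: l' => Vee a (bigVee l')
  end.

Definition lit (L : logic) (v : valuation) (p : nat) : form :=
  if v p then Atom p else neg L (Atom p).

Definition Theta (L : logic) (ps : list nat) (X : list valuation) : form :=
  neg L (neg L (bigVee (map (fun v => bigAnd (map (lit L v) ps)) X))).

(* Main.v *)
Require Import Defs.
From Stdlib Require Import List Classical.
Import ListNotations.

Lemma sat_empty : forall phi X, empty_team X -> sat phi X.
Proof.
  induction phi; simpl; intros X HX.
  - intros v Hv; exfalso; exact (HX v Hv).
  - exact HX.
  - exact I.
  - intros Y HY _; right; intros Z HZ _ v Hv; exact (HX v (HY v (HZ v Hv))).
  - intros v Hv; exfalso; exact (HX v Hv).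
  - split; auto.
  - exists X, X; split; [intros v; tauto | split; auto].
  - left; auto.
  - intros Y HY _; apply IHphi2; intros v Hv; exact (HX v (HY v Hv)).
Qed.

Lemma sat_down : forall phi X Y, subteam Y X -> sat phi X -> sat phi Y.
Proof.
  unfold subteam.
  induction phi; simpl; intros X Y HY H.
  - intros v Hv; auto.
  - intros v Hv; exact (H v (HY v Hv)).
  - exact I.
  - intros Z HZ; apply H; unfold subteam; auto.
  - intros v Hv; auto.
  - destruct H; split; eauto.
  - destruct H as [A [B [HAB [HA HB]]]].
    exists (fun v => A v /\ Y v), (fun v => B v /\ Y v); split.
    + intros v; split.
      * intros Yv; destruct (proj1 (HAB v) (HY v Yv)); tauto.
      * tauto.
    + split; [apply IHphi1 with A | apply IHphi2 with B]; auto; intros v []; auto.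
  - destruct H; [left|right]; eauto.
  - intros Z HZ; apply H; unfold subteam in *; auto.
Qed.

Lemma neg_sem L a X : sat (neg L a) X <-> forall v, X v -> ~ sat a (single v).
Proof.
  destruct L; simpl.
  - split.
    + intros H v Hv Ha. apply (H (single v)) with v; auto.
      intros w e; unfold single in e; subst; auto. reflexivity.
    + intros H Y HY Ha v Yv. apply (H v (HY v Yv)).
      apply sat_down with Y; auto. intros w e; unfold single in e; subst; auto.
  - tauto.
Qed.

Lemma single_neg L a v : sat (neg L a) (single v) <-> ~ sat a (single v).
Proof.
  rewrite neg_sem; split.
  - intros H; apply H; reflexivity.
  - intros H w e; unfold single in e; subst; auto.
Qed.

Definition up phi := forall X, (forall v, X v -> sat phi (single v)) -> sat phi X.

Lemma up_atom p : up (Atom p).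
Proof. intros X H v Xv; exact (H v Xv v eq_refl). Qed.
Lemma up_top : up Top.
Proof. intros X _; exact I. Qed.
Lemma up_bot : up Bot.
Proof. intros X H v Xv; exact (H v Xv v eq_refl). Qed.
Lemma up_neg L a : up (neg L a).
Proof.
  intros X H; apply neg_sem; intros v Xv; apply (proj1 (single_neg L a v)); auto.
Qed.
Lemma up_and a b : up a -> up b -> up (And a b).
Proof.
  intros Ha Hb X H; split; [apply Ha|apply Hb]; intros v Xv; apply (H v Xv).
Qed.
Lemma up_imp a b : up b -> up (Imp a b).
Proof.
  intros Hb X H Y HY Ha. apply Hb. intros v Yv.
  apply (H v (HY v Yv)). intros w e; exact e.
  apply sat_down with Y; auto. intros w e; unfold single in e; subst; auto.
Qed.

Lemma flat_of_up phi : up phi -> flat phi.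
Proof.
  intros H X; split.
  - intros Hs v Xv; apply sat_down with X; auto; intros w e; unfold single in e; subst; auto.
  - apply H.
Qed.

Lemma imp_single a b v :
  sat (Imp a b) (single v) <-> (sat a (single v) -> sat b (single v)).
Proof.
  simpl; split.
  - intros H Ha; apply H; auto; intros w e; exact e.
  - intros H Y HY Ha. destruct (classic (Y v)) as [Yv|nYv].
    + apply sat_down with (single v); auto.
      apply H. apply sat_down with Y; auto. intros w e; unfold single in e; subst; auto.
    + apply sat_empty. intros w Yw. apply nYv. rewrite <- (HY w Yw); auto.
Qed.

Lemma atom_single p v : sat (Atom p) (single v) <-> v p = true.
Proof.
  simpl; split; [intros H; apply H; reflexivity | intros H w e; unfold single in e; subst; auto].
Qed.

Lemma lit_single L u p v : sat (lit L u p) (single v) <-> v p = u p.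
Proof.
  unfold lit; destruct (u p).
  - apply atom_single.
  - rewrite single_neg, atom_single; destruct (v p); split; congruence.
Qed.

Lemma bigAnd_sat l X : sat (bigAnd l) X <-> forall a, In a l -> sat a X.
Proof.
  induction l as [|a l IH].
  - simpl; split; [intros _ a [] | intros _; exact I].
  - destruct l as [|b l'].
    + simpl; split; [intros H c [<-|[]]; auto | intros H; auto].
    + change (sat (And a (bigAnd (b :: l'))) X <-> forall c, In c (a :: b :: l') -> sat c X).
      simpl sat at 1. rewrite IH. split.
      * intros [H1 H2] c [<-|Hc]; auto.
      * intros H; split; [apply H; left; auto | intros c Hc; apply H; right; auto].
Qed.

Lemma bigVee_single l v : sat (bigVee l) (single v) <-> exists a, In a l /\ sat a (single v).
Proof.
  induction l as [|a l IH].
  - simpl; split; [intros H; exfalso; exact (H v eq_refl) | intros [a [[] _]]].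
  - destruct l as [|b l'].
    + simpl; split; [intros H; exists a; auto | intros [c [[<-|[]] H]]; auto].
    + change (sat (Vee a (bigVee (b :: l'))) (single v) <-> exists c, In c (a :: b :: l') /\ sat c (single v)).
      simpl sat at 1. rewrite IH. split.
      * intros [H|[c [Hc H]]]; [exists a; split; auto; left; auto | exists c; split; auto; right; auto].
      * intros [c [[<-|Hc] H]]; [left; auto | right; exists c; auto].
Qed.

Lemma theta_single L ps X v :
  sat (Theta L ps X) (single v) <-> exists u, In u X /\ forall p, In p ps -> v p = u p.
Proof.
  unfold Theta. rewrite single_neg, single_neg.
  rewrite bigVee_single. split.
  - intros H. apply NNPP in H. destruct H as [a [Ha Hs]].
    apply in_map_iff in Ha. destruct Ha as [u [<- Hu]].
    exists u; split; auto. intros p Hp.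
    rewrite bigAnd_sat in Hs. apply (proj1 (lit_single L u p v)). apply Hs. apply in_map; auto.
  - intros [u [Hu H]] Hn. apply Hn. exists (bigAnd (map (lit L u) ps)); split.
    + apply in_map_iff; exists u; auto.
    + apply bigAnd_sat. intros a Ha. apply in_map_iff in Ha. destruct Ha as [p [<- Hp]].
      apply (proj2 (lit_single L u p v)); auto.
Qed.

Lemma subst_neg L s a : subst s (neg L a) = neg L (subst s a).
Proof. destruct L; reflexivity. Qed.

Lemma subst_bigAnd s l : subst s (bigAnd l) = bigAnd (map (subst s) l).
Proof.
  induction l as [|a l IH]; [reflexivity|].
  destruct l as [|b l']; [reflexivity|].
  change (And (subst s a) (subst s (bigAnd (b :: l'))) = bigAnd (map (subst s) (a :: b :: l'))).
  rewrite IH. reflexivity.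
Qed.

Lemma subst_bigVee s l : subst s (bigVee l) = bigVee (map (subst s) l).
Proof.
  induction l as [|a l IH]; [reflexivity|].
  destruct l as [|b l']; [reflexivity|].
  change (Vee (subst s a) (subst s (bigVee (b :: l'))) = bigVee (map (subst s) (a :: b :: l'))).
  rewrite IH. reflexivity.
Qed.

Lemma in_and L a b : in_lang L a -> in_lang L b -> in_lang L (And a b).
Proof. destruct L; simpl; tauto. Qed.
Lemma in_vee L a b : in_lang L a -> in_lang L b -> in_lang L (Vee a b).
Proof. destruct L; simpl; tauto. Qed.
Lemma in_imp L a b : in_lang L a -> in_lang L b -> in_lang L (Imp a b).
Proof. destruct L; simpl; tauto. Qed.
Lemma in_atom L p : in_lang L (Atom p).
Proof. destruct L; simpl; tauto. Qed.
Lemma in_top L : in_lang L Top.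
Proof. destruct L; simpl; tauto. Qed.
Lemma in_bot L : in_lang L Bot.
Proof. destruct L; simpl; tauto. Qed.
Lemma in_neg L a : in_lang L a -> in_lang L (neg L a).
Proof. destruct L; simpl; tauto. Qed.

Lemma in_bigAnd L l : (forall a, In a l -> in_lang L a) -> in_lang L (bigAnd l).
Proof.
  induction l as [|a l IH]; intros H; [apply in_top|].
  destruct l as [|b l']; [apply H; left; auto|].
  change (in_lang L (And a (bigAnd (b :: l')))).
  apply in_and; [apply H; left; auto | apply IH; intros c Hc; apply H; right; auto].
Qed.
Lemma in_bigVee L l : (forall a, In a l -> in_lang L a) -> in_lang L (bigVee l).
Proof.
  induction l as [|a l IH]; intros H; [apply in_bot|].
  destruct l as [|b l']; [apply H; left; auto|].
  change (in_lang L (Vee a (bigVee (b :: l')))).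
  apply in_vee; [apply H; left; auto | apply IH; intros c Hc; apply H; right; auto].
Qed.

Lemma in_theta L ps X : in_lang L (Theta L ps X).
Proof.
  unfold Theta. apply in_neg, in_neg, in_bigVee. intros a Ha.
  apply in_map_iff in Ha; destruct Ha as [u [<- _]].
  apply in_bigAnd; intros b Hb. apply in_map_iff in Hb; destruct Hb as [p [<- _]].
  unfold lit; destruct (u p); [apply in_atom | apply in_neg, in_atom].
Qed.

Lemma in_subst L s phi : in_lang L phi -> (forall p, in_lang L (s p)) -> in_lang L (subst s phi).
Proof.
  destruct L; simpl; [|auto].
  intros H Hs; induction phi; simpl in *; intuition.
Qed.

Definition sig (L : logic) (ps : list nat) (X : list valuation) (w : valuation) (p : nat) : form :=
  And (Imp (Theta L ps X) (Atom p))
      (Imp (neg L (Theta L ps X)) (if w p then Top else Bot)).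

Lemma sig_single L ps X w p v :
  sat (sig L ps X w p) (single v) <->
  ((sat (Theta L ps X) (single v) -> v p = true) /\
   (~ sat (Theta L ps X) (single v) -> w p = true)).
Proof.
  unfold sig. change (sat (And ?a ?b) ?Y) with (sat a Y /\ sat b Y).
  rewrite !imp_single, atom_single, single_neg.
  destruct (w p); simpl.
  - split; [intros [H1 _]; split; auto | intros [H1 _]; split; auto].
  - split.
    + intros [H1 H2]; split; auto. intros Hn; exfalso; exact (H2 Hn v eq_refl).
    + intros [H1 H2]; split; auto. intros Hn; specialize (H2 Hn); discriminate.
Qed.

Theorem lemma4p3 (L : logic) (ps : list nat) (X : list valuation) :
  NoDup ps -> X <> nil ->
  projective L (flat_subst L) (Theta L ps X).
Proof.
  intros _ HX. destruct X as [|w X0] eqn:EX; [congruence|]. rewrite <- EX.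
  assert (Hw : In w X) by (rewrite EX; left; auto).
  clear HX.
  exists (sig L ps X w). split; [|split].
  - split.
    + intros p. unfold sig. apply in_and; apply in_imp; try apply in_theta; try (apply in_neg; apply in_theta);
        try apply in_atom. destruct (w p); [apply in_top|apply in_bot].
    + intros p. apply flat_of_up. unfold sig. apply up_and; apply up_imp;
        [apply up_atom|]. destruct (w p); [apply up_top|apply up_bot].
  - split; [intros g []|]. split.
    + apply in_subst; [apply in_theta|]. intros p. unfold sig.
      apply in_and; apply in_imp; try apply in_theta; try (apply in_neg; apply in_theta);
        try apply in_atom. destruct (w p); [apply in_top|apply in_bot].
    + intros Y _. unfold Theta. rewrite !subst_neg. apply neg_sem.
      intros v _. rewrite single_neg. intros Hn; apply Hn.
      rewrite subst_bigVee, bigVee_single.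
      destruct (classic (sat (Theta L ps X) (single v))) as [HT|HT].
      * pose proof HT as HT'. apply theta_single in HT'. destruct HT' as [u [Hu Hag]].
        exists (subst (sig L ps X w) (bigAnd (map (lit L u) ps))). split.
        { rewrite map_map. apply in_map_iff; exists u; auto. }
        rewrite subst_bigAnd, bigAnd_sat. intros a Ha.
        rewrite map_map in Ha. apply in_map_iff in Ha. destruct Ha as [p [<- Hp]].
        unfold lit. specialize (Hag p Hp). destruct (u p); change (subst (sig L ps X w) (Atom p)) with (sig L ps X w p).
        -- rewrite sig_single. split; auto; intros; contradiction.
        -- rewrite subst_neg, single_neg; change (subst (sig L ps X w) (Atom p)) with (sig L ps X w p); rewrite sig_single. intros [H1 _].
           rewrite (H1 HT) in Hag; discriminate.
      * exists (subst (sig L ps X w) (bigAnd (map (lit L w) ps))). split.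
        { rewrite map_map. apply in_map_iff; exists w; auto. }
        rewrite subst_bigAnd, bigAnd_sat. intros a Ha.
        rewrite map_map in Ha. apply in_map_iff in Ha. destruct Ha as [p [<- Hp]].
        unfold lit. destruct (w p) eqn:Ewp; change (subst (sig L ps X w) (Atom p)) with (sig L ps X w p).
        -- rewrite sig_single. split; auto; intros; contradiction.
        -- rewrite subst_neg, single_neg; change (subst (sig L ps X w) (Atom p)) with (sig L ps X w p); rewrite sig_single. intros [_ H2].
           rewrite (H2 HT) in Ewp; discriminate.
  - intros p. split.
    + split; [|split; [apply in_atom|]].
      { intros g [<-|[<-|[]]]; [apply in_theta|]. unfold sig.
        apply in_and; apply in_imp; try apply in_theta; try (apply in_neg; apply in_theta);
        try apply in_atom. destruct (w p); [apply in_top|apply in_bot]. }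
      intros Y H. assert (H1 := H _ (or_introl eq_refl)).
      assert (H2 := H _ (or_intror (or_introl eq_refl))).
      destruct H2 as [H2 _]. exact (H2 Y (fun v h => h) H1).
    + split; [|split].
      { intros g [<-|[<-|[]]]; [apply in_theta|apply in_atom]. }
      { unfold sig.
        apply in_and; apply in_imp; try apply in_theta; try (apply in_neg; apply in_theta);
        try apply in_atom. destruct (w p); [apply in_top|apply in_bot]. }
      intros Y H. assert (H1 := H _ (or_introl eq_refl)).
      assert (H2 := H _ (or_intror (or_introl eq_refl))).
      split.
      * intros Z HZ _. apply sat_down with Y; auto.
      * intros Z HZ HN. apply sat_empty. intros v Zv.
        rewrite neg_sem in HN. apply (HN v Zv).
        apply sat_down with Y; auto. intros u e; unfold single in e; subst; auto.
Qed.
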